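(* Let $\Gamma=\{\{(1)\},\{(0)\},\rightarrow,=\}\cup\{\mathrm{OR}^m : m\in\mathbb N, m\ge1\}$. Then every irreducible Boolean relation which is IHSB$+$ is a permutation of an element of $\Gamma$.
   Context: Here $\rightarrow=\{(0,0),(0,1),(1,1)\}$, $==\{(0,0),(1,1)\}$, $\{(1)\},\{(0)\}$ express the literals $x,\overline x$, and $\mathrm{OR}^m=\{0,1\}^m\setminus\{(0,\dots,0)\}$. A Boolean relation is IHSB$+$ if it is the solution set of a conjunction of clauses of the forms $x$, $\overline x$, $x\rightarrow y$, $(x_1\vee\dots\vee x_n)$. An $n$-ary relation $R$ is irreducible if for every formula $R_1(x^1_1,\dots,x^1_{k_1})\wedge\dots\wedge R_m(x^m_1,\dots,x^m_{k_m})$ (each $R_i$ an arbitrary $k_i$-ary Boolean relation, variables among $x_1,\dots,x_n$) equivalent to $R(x_1,\dots,x_n)$, some $R_i$ has arity at least $n$. A relation $R$ is a permutation of $S$ if $R(x_1,\dots,x_n)$ is equivalent to $S(x_{\Pi(1)},\dots,x_{\Pi(n)})$ for some permutation $\Pi$ of $\{1,\dots,n\}$. *)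

(* Defs.v *)
From mathcomp Require Import all_boot all_fingroup.
Set Implicit Arguments. Unset Strict Implicit. Unset Printing Implicit Defensive.

Definition brel (n : nat) := ('I_n -> bool) -> Prop.

(* Clauses allowed in IHSB+ formulas over the variables x_0..x_{n-1}:
   x_i,  ~x_i,  x_i -> x_j,  and nonempty positive disjunctions
   (x_i \/ x_{s_1} \/ ... \/ x_{s_k}). *)
Inductive clause (n : nat) : Type :=
| CPos of 'I_n
| CNeg of 'I_n
| CImp of 'I_n & 'I_n
| COr of 'I_n & seq 'I_n.

Definition clause_sat n (c : clause n) (x : 'I_n -> bool) : Prop :=
  match c with
  | CPos i => x i = true
  | CNeg i => x i = false
  | CImp i j => x i = true -> x j = true
  | COr i s => x i = true \/ exists2 j, j \in s & x j = true
  end.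

Definition IHSBplus n (R : brel n) : Prop :=
  exists (m : nat) (cs : 'I_m -> clause n),
    forall x, R x <-> (forall i : 'I_m, clause_sat (cs i) x).

Definition irreducible n (R : brel n) : Prop :=
  forall (m : nat) (k : 'I_m -> nat) (Rs : forall i : 'I_m, brel (k i))
         (vars : forall i : 'I_m, 'I_(k i) -> 'I_n),
    (forall x, R x <-> (forall i : 'I_m, Rs i (fun j => x (vars i j)))) ->
    exists i : 'I_m, n <= k i.

Definition is_permutation_of n (R S : brel n) : Prop :=
  exists p : 'S_n, forall x, R x <-> S (fun i => x (p i)).

Definition in_Gamma n (S : brel n) : Prop :=
  (n = 1 /\ forall x, S x <-> (forall i, x i = true))
  \/ (n = 1 /\ forall x, S x <-> (forall i, x i = false))
  \/ (n = 2 /\ forall x, S x <->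
        (forall i j : 'I_n, val i = 0 -> val j = 1 -> x i = true -> x j = true))
  \/ (n = 2 /\ forall x, S x <-> (forall i j : 'I_n, x i = x j))
  \/ (1 <= n /\ forall x, S x <-> (exists i, x i = true)).

(* Main.v *)
Require Import Defs.
From mathcomp Require Import all_boot all_fingroup.
From mathcomp Require Import zify.
From Stdlib Require Import Classical FunctionalExtensionality.
Set Implicit Arguments. Unset Strict Implicit. Unset Printing Implicit Defensive.

Definition flip n (x : 'I_n -> bool) (k : 'I_n) : 'I_n -> bool :=
  fun l => if l == k then ~~ x l else x l.

Definition vars n (i : 'I_n) (j : 'I_n.-1) : 'I_n :=
  insubd i (if val j < val i then val j else (val j).+1).

Lemma vars_onto n (i l : 'I_n) : l != i -> exists j : 'I_n.-1, vars i j = l.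
Proof.
move=> Hli.
have Hne : val l <> val i by move=> E; move/eqP: Hli; apply; apply: val_inj.
have Hl := ltn_ord l; have Hi := ltn_ord i.
have Hb : (if val l < val i then val l else (val l).-1) < n.-1.
  have aux : forall a b, a <> b -> a < n -> b < n -> (if a < b then a else a.-1) < n.-1.
    by move=> a b ? ? ?; case: ifP => ?; lia.
  exact: aux.
exists (Ordinal Hb); apply: val_inj; rewrite /vars val_insubd /=.
case: (ltnP (val l) (val i)) => H /=.
  by rewrite H Hl.
have -> : (val l).-1 < val i = false by apply/negbTE; lia.
have -> : (val l).-1.+1 = val l by lia.
by rewrite Hl.
Qed.

Lemma proj_step n (R : brel n) : irreducible R ->
  exists x, ~ R x /\ forall k, R (flip x k).
Proof.
move=> Hirr; apply: NNPP => H.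
pose Rs := fun (i : 'I_n) (y : 'I_n.-1 -> bool) =>
  exists z, R z /\ forall j : 'I_n.-1, z (vars i j) = y j.
have := @Hirr n (fun _ => n.-1) Rs (@vars n).
case.
- move=> x; split.
  + by move=> Rx i; exists x; split.
  + move=> Hx; apply: NNPP => nRx; apply: H; exists x; split => // k.
    have [z [Rz Hz]] := Hx k.
    have agree : forall l, l != k -> z l = x l.
      by move=> l /vars_onto [j <-]; apply: Hz.
    case: (boolP (z k == x k)) => Hk.
      exfalso; apply: nRx.
      have -> : x = z; last done.
      apply: functional_extensionality => l.
      case: (eqVneq l k) => [->|/agree ->//]; by rewrite (eqP Hk).
    have -> : flip x k = z; last done.
    apply: functional_extensionality => l; rewrite /flip.
    case: (eqVneq l k) => [->|/agree ->//].
    by move: Hk; case: (z k); case: (x k).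
- move=> i /=; have := ltn_ord i; lia.
Qed.

Lemma perm_id n (R S : brel n) : (forall x, R x <-> S x) -> is_permutation_of R S.
Proof.
move=> H; exists 1%g => x.
have -> : (fun i => x ((1%g : {perm _}) i)) = x.
  by apply: functional_extensionality => i; rewrite perm1.
exact: H.
Qed.

Lemma ihsb_or n (R : brel n) m (cs : 'I_m -> clause n) :
  (forall x, R x <-> (forall i : 'I_m, clause_sat (cs i) x)) ->
  forall a b, R a -> R b -> R (fun l => a l || b l).
Proof.
move=> Hcs a b Ra Rb; apply/Hcs => c.
have Ha := proj1 (Hcs a) Ra c; have Hb := proj1 (Hcs b) Rb c.
move: Ha Hb; case: (cs c) => [i|i|i j|i s] /=.
- by move=> -> .
- by move=> -> ->.
- by move=> H1 H2 /orP [/H1|/H2] ->; rewrite ?orbT.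
- move=> [Ha|[j js Ha]] _; first by left; rewrite Ha.
  by right; exists j => //; rewrite Ha.
Qed.

Lemma flip_same n (x : 'I_n -> bool) k : flip x k k = ~~ x k.
Proof. by rewrite /flip eqxx. Qed.

Lemma flip_other n (x : 'I_n -> bool) k l : l != k -> flip x k l = x l.
Proof. by rewrite /flip => /negbTE ->. Qed.

Theorem mainTheorem11 (n : nat) (R : brel n) :
  irreducible R -> IHSBplus R ->
  exists S : brel n, in_Gamma S /\ is_permutation_of R S.
Proof.
move=> Hirr [m [cs Hcs]].
have [x [nRx Hnb]] := proj_step Hirr.
have Hor := ihsb_or Hcs.
have [i0 Hi0] : exists i, ~ clause_sat (cs i) x.
  apply: NNPP => H; apply: nRx; apply/Hcs => i; apply: NNPP => H'; apply: H; by exists i.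
have HR : forall a, R a -> clause_sat (cs i0) a by move=> a Ra; exact: (proj1 (Hcs a) Ra i0).
have Hc : forall k, clause_sat (cs i0) (flip x k) by move=> k; apply: HR.
have Hext : forall a b, (forall l, a l = b l) -> R a -> R b.
  by move=> a b H; have -> : a = b by apply: functional_extensionality.
move: Hi0 Hc HR; case: (cs i0) => [i|i|i j|i s] /= Hi0 Hc HR.
-
  have xi : x i = false by move: Hi0; case: (x i).
  have Hall : forall k, k = i.
    move=> k; apply/eqP; apply: contraT => Hk.
    by have := Hc k; rewrite flip_other 1?eq_sym // xi.
  have n1 : n = 1.
    have Hi := ltn_ord i.
    case: (ltnP 1 n) => Hn; last by lia.
    have H0 : 0 < n by lia.
    have := Hall (Ordinal Hn); have := Hall (Ordinal H0).
    by move=> E1 E2; have := f_equal val E1; have := f_equal val E2; rewrite /=; lia.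
  exists (fun a => forall l, a l = true); split; first by left.
  apply: perm_id => a; split.
  + by move=> Ra l; rewrite (Hall l); apply: HR.
  + move=> H; apply: (Hext (flip x i)) => [l|]; last exact: Hnb.
    by rewrite (Hall l) flip_same xi H.
-
  have xi : x i = true by move: Hi0; case: (x i).
  have Hall : forall k, k = i.
    move=> k; apply/eqP; apply: contraT => Hk.
    by have := Hc k; rewrite flip_other 1?eq_sym // xi.
  have n1 : n = 1.
    have Hi := ltn_ord i.
    case: (ltnP 1 n) => Hn; last by lia.
    have H0 : 0 < n by lia.
    have := Hall (Ordinal Hn); have := Hall (Ordinal H0).
    by move=> E1 E2; have := f_equal val E1; have := f_equal val E2; rewrite /=; lia.
  exists (fun a => forall l, a l = false); split; first by right; left.
  apply: perm_id => a; split.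
  + by move=> Ra l; rewrite (Hall l); apply: HR.
  + move=> H; apply: (Hext (flip x i)) => [l|]; last exact: Hnb.
    by rewrite (Hall l) flip_same xi H.
-
  have xi : x i = true by move: Hi0; case: (x i); case: (x j) => //; tauto.
  have xj : x j = false by move: Hi0; case: (x i); case: (x j) => //; tauto.
  have ij : j != i by apply/eqP => E; move: xi; rewrite -E xj.
  have Hall : forall k, k = i \/ k = j.
    move=> k; apply: NNPP => H.
    have ki : k != i by apply/eqP => E; apply: H; left.
    have kj : k != j by apply/eqP => E; apply: H; right.
    by have := Hc k; rewrite !flip_other 1?eq_sym // xi xj => /(_ erefl).
  have Hi := ltn_ord i; have Hj := ltn_ord j.
  have vij : nat_of_ord i <> nat_of_ord j by move=> E; move/eqP: ij; apply; apply: val_inj.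
  have Hallv : forall k : 'I_n, nat_of_ord k = nat_of_ord i \/ nat_of_ord k = nat_of_ord j.
    by move=> k; case: (Hall k) => ->; [left|right].
  have n2 : n = 2.
    case: (ltnP 2 n) => Hn; last by lia.
    have H0 : 0 < n by lia. have H1 : 1 < n by lia.
    have := Hallv (Ordinal H0); have := Hallv (Ordinal H1); have := Hallv (Ordinal Hn).
    rewrite /=; lia.
  have Req : forall a b, a i = b i -> a j = b j -> R a -> R b.
    move=> a b Ei Ej; apply: Hext => l; by case: (Hall l) => ->.
  have Rff : forall a, a i = false -> a j = false -> R a.
    move=> a Ei Ej; apply: (Req (flip x i)); last exact: Hnb.
      by rewrite flip_same xi Ei.
    by rewrite flip_other // xj Ej.
  have Rtt : forall a, a i = true -> a j = true -> R a.
    move=> a Ei Ej; apply: (Req (flip x j)); last exact: Hnb.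
      by rewrite flip_other 1?eq_sym // xi Ei.
    by rewrite flip_same xj Ej.
  case: (classic (R (fun l => l == j))) => P.
  + exists (fun a => forall l k : 'I_n, val l = 0 -> val k = 1 -> a l = true -> a k = true).
    split; first by right; right; left.
    pose p : 'S_n := if val i == 0 then 1%g else tperm i j.
    have Hp : forall l : 'I_n, (val l = 0 -> p l = i) /\ (val l = 1 -> p l = j).
      move=> l; rewrite /p; case: eqP => Hi0'.
      * rewrite perm1; split => Hl; apply: val_inj; simpl in *; lia.
        split => Hl0.
        - have lj : l = j by apply: val_inj; case: (Hallv l); simpl in *; lia.
          by rewrite lj tpermR.
        - have li : l = i by apply: val_inj; case: (Hallv l); simpl in *; lia.
          by rewrite li tpermL.
    exists p => a; split.
    * move=> Ra l k Hl Hk; rewrite (proj1 (Hp l) Hl) (proj2 (Hp k) Hk); exact: HR.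
    * move=> H.
      have H0 : 0 < n by lia. have H1 : 1 < n by lia.
      have := H (Ordinal H0) (Ordinal H1) erefl erefl.
      rewrite (proj1 (Hp (Ordinal H0)) erefl) (proj2 (Hp (Ordinal H1)) erefl) => Hij.
      case Ai: (a i); case Aj: (a j).
      - exact: Rtt.
      - by move: (Hij Ai); rewrite Aj.
      - apply: (Req (fun l => l == j)) => //; first by rewrite Ai eq_sym (negbTE ij).
        by rewrite Aj eqxx.
      - exact: Rff.
  + exists (fun a => forall l k : 'I_n, a l = a k); split; first by right; right; right; left.
    apply: perm_id => a; split.
    * move=> Ra.
      have Aij : a i = a j.
        move: (HR a Ra); case Ai: (a i); case Aj: (a j) => //.
        - by move=> /(_ erefl).
        - move=> _; exfalso; apply: P; apply: (Req a) => //.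
            by rewrite Ai eq_sym (negbTE ij).
          by rewrite Aj eqxx.
      move=> l k; by case: (Hall l) => ->; case: (Hall k) => ->.
    * move=> H; have := H i j.
      by case Ai: (a i); case Aj: (a j) => // _; [apply: Rtt | apply: Rff].
-
  have Hx : forall k, x k = false.
    move=> k; apply/negbTE/negP => xk.
    have xi : x i = false by apply/negbTE/negP => xi; apply: Hi0; left.
    have xs : forall l, l \in s -> x l = false.
      by move=> l ls; apply/negbTE/negP => xl; apply: Hi0; right; exists l.
    have ff : forall l, (l = i \/ l \in s) -> flip x k l = true -> False.
      move=> l Hl; have lk : l != k.
        by apply/eqP => E; move: xk; rewrite -E; case: Hl => [->|/xs ->]; rewrite ?xi.
      rewrite flip_other //; by case: Hl => [->|/xs ->]; rewrite ?xi.
    case: (Hc k) => [/(ff i (or_introl erefl)) //|[l ls /(ff l (or_intror ls)) //]].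
  have He : forall k, R (fun l => l == k).
    move=> k; apply: (Hext (flip x k)); last exact: Hnb.
    move=> l /=; case: (eqVneq l k) => [->|lk]; first by rewrite flip_same Hx.
    by rewrite flip_other // Hx (negbTE lk).
  have Hseq : forall (k : 'I_n) t, R (fun l => l \in k :: t).
    move=> k t; elim: t k => [|k' t IH] k.
      by apply: (Hext (fun l => l == k)) => // l; rewrite inE.
    apply: (Hext (fun l => (l == k) || (l \in k' :: t))); last exact: Hor.
    by move=> l; rewrite inE.
  exists (fun a => exists l, a l = true); split.
    by right; right; right; right; split => //; have := ltn_ord i; lia.
  apply: perm_id => a; split.
  + move=> Ra; apply: NNPP => H; apply: nRx; apply: (Hext a) => // l.
    rewrite Hx; apply/negbTE/negP => al; apply: H; by exists l.
  + move=> [l al].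
    have : l \in [seq k <- enum 'I_n | a k] by rewrite mem_filter al mem_enum.
    case E: [seq k <- enum 'I_n | a k] => [//|k t] _.
    apply: (Hext (fun l => l \in k :: t)); last exact: Hseq.
    by move=> l'; rewrite -E mem_filter mem_enum andbT.
Qed.
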